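(* Let $H\subseteq G$ be finite simple graphs ($H$ a subgraph of $G$). Then $\nu_*(H)\le\nu_*(G)$, and if moreover $V(H)=V(G)$, then $\nu^*(H)\le\nu^*(G)$.
   Context: For a finite simple graph $G=(V,E)$ with $\ell=|V|+|E|$, a construction sequence (c-sequence) is a bijection $x:\{1,\dots,\ell\}\to V\sqcup E$ such that every edge $e=uw$ satisfies $x^{-1}(e)>\max\{x^{-1}(u),x^{-1}(w)\}$. The cost of $x$ is $\nu(x)=\sum_{e=uw\in E}\big(2x^{-1}(e)-x^{-1}(u)-x^{-1}(w)\big)$; $\nu^*(G)$ and $\nu_*(G)$ are the maximum and minimum of $\nu(x)$ over all c-sequences for $G$. *)

(* Defs.v *)
From mathcomp Require Import all_boot.
Set Implicit Arguments. Unset Strict Implicit. Unset Printing Implicit Defensive.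

Record sgraph (T : finType) := SGraph { gV : {set T}; gE : {set {set T}} }.

Definition is_sgraph (T : finType) (G : sgraph T) : bool :=
  [forall e in gE G, (#|e| == 2) && (e \subset gV G)].

Definition subgraph (T : finType) (H G : sgraph T) : bool :=
  (gV H \subset gV G) && (gE H \subset gE G).

Definition elems (T : finType) (G : sgraph T) : seq (T + {set T}) :=
  [seq inl v | v <- enum (gV G)] ++ [seq inr e | e <- enum (gE G)].

(* A sequence s listing each element of V ⊔ E exactly once represents the
   bijection x : {1..l} -> V ⊔ E with x (i.+1) = nth s i; then
   x^{-1}(z) = pos s z. *)
Definition pos (T : finType) (s : seq (T + {set T})) (z : T + {set T}) : nat :=
  (index z s).+1.

Definition is_cseq (T : finType) (G : sgraph T) (s : seq (T + {set T})) : bool :=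
  perm_eq s (elems G) &&
  [forall e in gE G, [forall v in e, pos s (inl v) < pos s (inr e)]].

(* nu(x) = sum over edges e = uw of (2 x^{-1}(e) - x^{-1}(u) - x^{-1}(w));
   for a c-sequence every summand is positive, so nat subtraction is exact. *)
Definition cost (T : finType) (G : sgraph T) (s : seq (T + {set T})) : nat :=
  \sum_(e in gE G) (2 * pos s (inr e) - \sum_(v in e) pos s (inl v)).

Definition cseqs (T : finType) (G : sgraph T) : seq (seq (T + {set T})) :=
  [seq s <- permutations (elems G) | is_cseq G s].

Definition costs (T : finType) (G : sgraph T) : seq nat :=
  sort leq [seq cost G s | s <- cseqs G].

(* minimum / maximum cost over all c-sequences (the list is never empty) *)
Definition nu_min (T : finType) (G : sgraph T) : nat := head 0 (costs G).
Definition nu_max (T : finType) (G : sgraph T) : nat := last 0 (costs G).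

(* Main.v *)
Require Import Defs.
From mathcomp Require Import all_boot zify.
Set Implicit Arguments. Unset Strict Implicit.

Section Aux.
Variable T : finType.
Implicit Types (H G : sgraph T) (s : seq (T + {set T})).

Definition Pin H : pred (T + {set T}) := fun z =>
  match z with inl v => v \in gV H | inr e => e \in gE H end.

Lemma mem_elems G z : (z \in elems G) = Pin G z.
Proof.
rewrite /elems mem_cat; case: z => [v|e] /=.
  rewrite mem_map ?mem_enum; last by move=> a b [].
  have -> : (inl v \in [seq inr e | e <- enum (gE G)]) = false.
    by apply/negbTE/mapP => -[].
  by rewrite orbF.
rewrite [X in X || _](_ : _ = false); last by apply/negbTE/mapP => -[].
by rewrite mem_map ?mem_enum //; move=> a b [].
Qed.

Lemma uniq_elems G : uniq (elems G).
Proof.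
rewrite /elems cat_uniq !map_inj_uniq ?enum_uniq //; try by move=> a b [].
rewrite andbT /=; apply/hasPn => z /mapP [e _ ->]; apply/mapP => -[] //.
Qed.

Lemma elems_cseq G : is_sgraph G -> is_cseq G (elems G).
Proof.
move=> /forallP sG; rewrite /is_cseq perm_refl /=.
apply/forallP => e; apply/implyP => eE; apply/forallP => v; apply/implyP => ve.
have /andP [_ /subsetP sub] := implyP (sG e) eE.
have vV := sub v ve.
rewrite /pos /elems !index_cat ltnS.
have -> : (inl v : T + {set T}) \in [seq inl v | v <- enum (gV G)] by apply/mapP; exists v; rewrite ?mem_enum.
have -> : ((inr e : T + {set T}) \in [seq inl v | v <- enum (gV G)]) = false by apply/negbTE/mapP => -[].
apply: leq_trans (leq_addr _ _).
by rewrite index_mem; apply/mapP; exists v; rewrite ?mem_enum.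
Qed.

Lemma sorted_head_le (l : seq nat) x : sorted leq l -> x \in l -> head 0 l <= x.
Proof.
move=> sl xl; have := sorted_leq_nth leq_trans leqnn 0 sl.
move=> /(_ 0 (index x l)); rewrite nth_index //= => -> //; rewrite inE.
  by case: l xl {sl}.
by rewrite index_mem.
Qed.

Lemma sorted_last_ge (l : seq nat) x : sorted leq l -> x \in l -> x <= last 0 l.
Proof.
move=> sl xl; have := sorted_leq_nth leq_trans leqnn 0 sl.
move=> /(_ (index x l) (size l).-1); rewrite nth_index // -nth_last => -> //;
  rewrite ?inE ?index_mem //.
  by case: l xl {sl}.
all: try by case: l xl {sl}.
have : index x l < size l by rewrite index_mem.
by case: (size l).
Qed.

Lemma index_filter (P : pred (T + {set T})) s z :
  P z -> index z (filter P s) = count P (take (index z s) s).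
Proof.
move=> Pz; elim: s => [|a t IH] //=.
case: (eqVneq a z) => [->|nz] /=; first by rewrite Pz /= eqxx.
case Pa: (P a) => /=; last by rewrite IH.
by rewrite (negbTE nz) IH.
Qed.

Lemma count_take_split (P : pred (T + {set T})) s i j : i <= j ->
  count P (take j s) = count P (take i s) + count P (take (j - i) (drop i s)).
Proof. by move=> ij; rewrite -{1}(subnKC ij) takeD count_cat. Qed.

Lemma filter_pos (P : pred (T + {set T})) s x y :
  P x -> P y -> x \in s -> index x s < index y s ->
  index x (filter P s) < index y (filter P s) /\
  index y (filter P s) - index x (filter P s) <= index y s - index x s.
Proof.
move=> Px Py xs lt.
rewrite !index_filter // (@count_take_split P s _ _ (ltnW lt)).
have hc : count P (take (index y s - index x s) (drop (index x s) s)) <= index y s - index x s.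
  by apply: leq_trans (count_size _ _) _; rewrite size_take_min geq_minl.
split; last by lia.
have ix : index x s < size s by rewrite index_mem.
rewrite (drop_nth x ix) nth_index //.
have -> : index y s - index x s = (index y s - index x s).-1.+1 by lia.
rewrite /= Px /=; lia.
Qed.

Lemma sum_sub (e : {set T}) (a : nat) (f : T -> nat) :
  (forall v, v \in e -> f v <= a) ->
  #|e| * a - \sum_(v in e) f v = \sum_(v in e) (a - f v).
Proof.
move=> hf.
have : \sum_(v in e) (a - f v) + \sum_(v in e) f v = #|e| * a.
  rewrite -big_split /= -sum_nat_const; apply: eq_bigr => v ve.
  by rewrite subnK // hf.
lia.
Qed.


Lemma restrict_cseq H G s : is_sgraph H -> subgraph H G -> is_cseq G s ->
  is_cseq H (filter (Pin H) s) /\ cost H (filter (Pin H) s) <= cost G s.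
Proof.
move=> /forallP sH /andP[/subsetP sV /subsetP sE] /andP[pe /forallP cs].
have us : uniq s by rewrite (perm_uniq pe) uniq_elems.
have ms z : (z \in s) = Pin G z by rewrite (perm_mem pe) mem_elems.
set s' := filter (Pin H) s.
have key e v : e \in gE H -> v \in e ->
   index (inl v) s' < index (inr e) s' /\
   index (inr e) s' - index (inl v) s' <= index (inr e) s - index (inl v) s /\
   index (inl v) s < index (inr e) s.
  move=> eH ve.
  have /andP [_ /subsetP subV] := implyP (sH e) eH.
  have vH := subV v ve.
  have eG := sE e eH.
  have lt : index (inl v) s < index (inr e) s.
    by have := implyP (cs e) eG => /forallP /(_ v) /implyP /(_ ve).
  have xs : inl v \in s by rewrite ms /= sV.
  have [h1 h2] := @filter_pos (Pin H) s (inl v) (inr e) vH eH xs lt.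
  by [].
split.
  rewrite /is_cseq; apply/andP; split.
    apply: uniq_perm; first by rewrite filter_uniq.
      exact: uniq_elems.
    move=> z; rewrite mem_filter ms mem_elems.
    case: z => [v|e] /=; apply/andP/idP => [[]//|h]; split => //.
      exact: sV. exact: sE.
  apply/forallP => e; apply/implyP => eH; apply/forallP => v; apply/implyP => ve.
  by have [h _] := key e v eH ve; rewrite /pos ltnS.
rewrite /cost.
apply: (@leq_trans (\sum_(e in gE H)
   (2 * pos s (inr e) - \sum_(v in e) pos s (inl v)))).
  apply: leq_sum => e eH.
  have /andP [/eqP c2 _] := implyP (sH e) eH.
  rewrite -c2 !sum_sub; first last.
  - by move=> v ve; have [h1 [h2 h3]] := key e v eH ve; rewrite /pos ltnS; apply: ltnW.
  - by move=> v ve; have [h1 [h2 h3]] := key e v eH ve; rewrite /pos ltnS; apply: ltnW.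
  apply: leq_sum => v ve; have [h1 [h2 h3]] := key e v eH ve.
  by rewrite /pos !subSS.
rewrite [X in _ <= X](big_setID (gE H)) /=.
have -> : gE G :&: gE H = gE H by apply/setIidPr/subsetP.
exact: leq_addr.
Qed.

Lemma extend_cseq H G s : is_sgraph G -> subgraph H G -> gV H = gV G ->
  is_cseq H s ->
  is_cseq G (s ++ [seq inr e | e <- enum (gE G :\: gE H)]) /\
  cost H s <= cost G (s ++ [seq inr e | e <- enum (gE G :\: gE H)]).
Proof.
move=> /forallP sG /andP[/subsetP sV /subsetP sE] eV /andP[pe /forallP cs].
have us : uniq s by rewrite (perm_uniq pe) uniq_elems.
have ms z : (z \in s) = Pin H z by rewrite (perm_mem pe) mem_elems.
set t := [seq inr e | e <- enum (gE G :\: gE H)].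
have mt z : (z \in t) = (match z with inl _ => false | inr e => e \in gE G :\: gE H end).
  case: z => [v|e] /=; first by apply/negbTE/mapP => -[].
  by rewrite mem_map ?mem_enum //; move=> a b [].
have idx z : z \in s -> index z (s ++ t) = index z s by move=> zs; rewrite index_cat zs.
split.
  apply/andP; split.
    apply: uniq_perm; last first.
    - move=> z; rewrite mem_cat ms mt mem_elems; case: z => [v|e] /=.
        by rewrite orbF eV.
      rewrite in_setD; case: (boolP (e \in gE H)) => /= h.
        by rewrite sE.
      by [].
    - exact: uniq_elems.
    rewrite cat_uniq us /= map_inj_uniq ?enum_uniq ?andbT; last by move=> a b [].
    apply/hasPn => z; rewrite mt; case: z => [//|e].
    by rewrite in_setD ms /= => /andP[/negbTE -> _].
  apply/forallP => e; apply/implyP => eG; apply/forallP => v; apply/implyP => ve.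
  have /andP [_ /subsetP subV] := implyP (sG e) eG.
  have vs : inl v \in s by rewrite ms /= eV subV.
  rewrite /pos ltnS idx //.
  case: (boolP (e \in gE H)) => eH.
    have es : inr e \in s by rewrite ms.
    rewrite idx //.
    by have := implyP (cs e) eH => /forallP /(_ v) /implyP /(_ ve); rewrite /pos ltnS.
  rewrite index_cat.
  have -> : (inr e \in s) = false by rewrite ms /=; apply/negbTE.
  apply: leq_trans (leq_addr _ _); by rewrite index_mem.
rewrite /cost [X in _ <= X](big_setID (gE H)) /=.
have -> : gE G :&: gE H = gE H by apply/setIidPr/subsetP.
apply: leq_trans (leq_addr _ _).
rewrite leq_eqVlt; apply/orP; left; apply/eqP.
apply: eq_bigr => e eH.
have es : inr e \in s by rewrite ms.
have /andP [_ /subsetP subV] := implyP (sG e) (sE e eH).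
rewrite /pos idx //; congr (_ - _).
apply: eq_bigr => v ve; rewrite idx // ms /= eV subV //.
Qed.

End Aux.

Lemma in_cseqs (T : finType) (G : sgraph T) s : is_cseq G s -> s \in cseqs G.
Proof.
move=> c; rewrite mem_filter c mem_permutations /=.
by case/andP: c.
Qed.

Lemma cost_in (T : finType) (G : sgraph T) s : is_cseq G s -> cost G s \in costs G.
Proof. by move=> c; rewrite mem_sort; apply: map_f; apply: in_cseqs. Qed.

Lemma costs_sorted (T : finType) (G : sgraph T) : sorted leq (costs G).
Proof. exact: (sort_sorted leq_total). Qed.

Lemma nu_min_in (T : finType) (G : sgraph T) : is_sgraph G ->
  exists2 s, is_cseq G s & nu_min G = cost G s.
Proof.
move=> sG; have := cost_in (elems_cseq sG).
have : nu_min G \in costs G.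
  rewrite /nu_min; case: (costs G) (cost_in (elems_cseq sG)) => //= a l _.
  exact: mem_head.
rewrite mem_sort => /mapP [s]; rewrite mem_filter => /andP [c _] ->.
by exists s.
Qed.

Lemma nu_max_in (T : finType) (G : sgraph T) : is_sgraph G ->
  exists2 s, is_cseq G s & nu_max G = cost G s.
Proof.
move=> sG.
have : nu_max G \in costs G.
  rewrite /nu_max; case: (costs G) (cost_in (elems_cseq sG)) => //= a l _.
  exact: mem_last.
rewrite mem_sort => /mapP [s]; rewrite mem_filter => /andP [c _] ->.
by exists s.
Qed.

Theorem lemma6 (T : finType) (H G : sgraph T) :
  is_sgraph H -> is_sgraph G -> subgraph H G ->
  nu_min H <= nu_min G /\ (gV H = gV G -> nu_max H <= nu_max G).
Proof.
move=> sH sG sub; split.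
  have [s c ->] := nu_min_in sG.
  have [c' le] := restrict_cseq sH sub c.
  apply: leq_trans le; apply: sorted_head_le; first exact: costs_sorted.
  exact: cost_in.
move=> eV.
have [s c ->] := nu_max_in sH.
have [c' le] := extend_cseq sG sub eV c.
apply: leq_trans le _; apply: sorted_last_ge; first exact: costs_sorted.
exact: cost_in.
Qed.
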